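(* For $n\geqslant1$, $m,f\geqslant0$ let $\mathfrak{l}_{n,m,f}$ be the number of inversion sequences $\sigma$ of length $n$ avoiding both $010$ and $110$, with maximum value $m$ and $\mathrm{forb}(\sigma,\{010,110\})=f$. Then for all $n\geqslant1$, $m\geqslant1$, $f\geqslant0$, $$\mathfrak{l}_{n,m,f}=\sum_{p=m+1}^{n}\sum_{i=0}^{f-1}\sum_{j=0}^{m-1}\mathfrak{l}_{p-1,j,i}\cdot\Bigl(\mathfrak{j}_{n-p,\,m-i,\,f-i-1}+\delta_{f,m+1}\sum_{\ell=0}^{n-p-1}\mathfrak{k}_{\ell,\,m-i}\Bigr),$$ where $\mathfrak{j}_{a,b,c}$ is the number of words of length $a$ over $\{0,\dots,b-1\}$ avoiding $010$ and $110$ with $\mathrm{forb}=c$ (the empty word having $\mathrm{forb}=0$), and $\mathfrak{k}_{a,b}$ is the number of words of length $a$ over $\{0,\dots,b-1\}$ avoiding $010$ and $110$.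
   Context: $\delta_{a,b}$ is the Kronecker delta. An inversion sequence of length $n$ is a sequence $(\sigma_1,\dots,\sigma_n)$ of integers with $0\leqslant\sigma_i<i$. A sequence contains a pattern $p$ if some subsequence is order-isomorphic to $p$; otherwise it avoids $p$. Avoiding $010$: no $i<j<l$ with $\sigma_i=\sigma_l<\sigma_j$. Avoiding $110$: no $i<j<l$ with $\sigma_i=\sigma_j>\sigma_l$. For a nonempty sequence $\sigma$ avoiding a set of patterns $P$, a value $v\in\{0,\dots,\max(\sigma)\}$ is forbidden if $\sigma$ followed by $M$ and then $v$ contains some pattern of $P$, where $M>\max(\sigma)$; $\mathrm{forb}(\sigma,P)$ is the number of forbidden values. *)

(* Defs.v *)
From mathcomp Require Import all_boot.
Set Implicit Arguments. Unset Strict Implicit. Unset Printing Implicit Defensive.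

(* Sequences are seq nat, 0-indexed: s`_i = nth 0 s i. *)

(* Inversion sequence: (sigma_1..sigma_n) with 0 <= sigma_i < i (1-indexed). *)
Definition inversion_seq (s : seq nat) : bool :=
  [forall i : 'I_(size s), nth 0 s i < i.+1].

Definition contains010 (s : seq nat) : bool :=
  [exists i : 'I_(size s), exists j : 'I_(size s), exists l : 'I_(size s),
    [&& i < j, j < l, nth 0 s i == nth 0 s l & nth 0 s l < nth 0 s j]].

Definition contains110 (s : seq nat) : bool :=
  [exists i : 'I_(size s), exists j : 'I_(size s), exists l : 'I_(size s),
    [&& i < j, j < l, nth 0 s i == nth 0 s j & nth 0 s l < nth 0 s j]].

Definition avoids (s : seq nat) : bool := ~~ contains010 s && ~~ contains110 s.

Definition maxval (s : seq nat) : nat := \max_(x <- s) x.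

Definition forb (s : seq nat) : nat :=
  count (fun v => ~~ avoids (s ++ [:: (maxval s).+1; v])) (iota 0 (maxval s).+1).

(* l_{n,m,f}: inversion sequences of length n (entries are < n, so they are
   the n-tuples over 'I_n satisfying inversion_seq). *)
Definition lcount (n m f : nat) : nat :=
  #|[set t : n.-tuple 'I_n |
      let s := map val t in
      [&& inversion_seq s, avoids s, maxval s == m & forb s == f]]|.

Definition jcount (a b c : nat) : nat :=
  #|[set t : a.-tuple 'I_b | let s := map val t in avoids s && (forb s == c)]|.

Definition kcount (a b : nat) : nat :=
  #|[set t : a.-tuple 'I_b | avoids (map val t)]|.

Definition kdelta (a b : nat) : nat := (a == b : nat).

(* Main.v *)
Require Import Defs.
From mathcomp Require Import all_boot zify.
Set Implicit Arguments. Unset Strict Implicit. Unset Printing Implicit Defensive.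

Fixpoint W (L c : nat) : seq (seq nat) :=
  if L is L'.+1 then [seq x :: u | x <- iota 0 c, u <- W L' c] else [:: [::]].

Lemma memW L c s : (s \in W L c) = (size s == L) && all (fun x => x < c) s.
Proof.
elim: L s => [|L IH] [|x s] //=.
- by apply/allpairsPdep; case=> [y [t [_ _ //]]].
- apply/idP/idP.
  + case/allpairsPdep=> y [t [hy ht [-> ->]]]; move: ht; rewrite IH => /andP[/eqP -> ->].
    by move: hy; rewrite mem_iota /= !andbT eqxx.
  + case/andP=> hs /andP[hx ha]; apply/allpairsPdep; exists x, s; split=> //.
    by rewrite mem_iota. by rewrite IH -(eqn_add2r 1) !addn1 hs ha.
Qed.

Lemma uniqW L c : uniq (W L c).
Proof.
elim: L => [|L IH] //=.
apply: allpairs_uniq => //; first exact: iota_uniq.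
by move=> [a u] [b v] _ _ /= [-> ->].
Qed.

Lemma count_sum (T : Type) (P : pred T) (s : seq T) : count P s = \sum_(x <- s) (P x : nat).
Proof. by elim: s => [|x s IH]; rewrite ?big_nil ?big_cons //= IH. Qed.

Lemma sumW_cons L c (F : seq nat -> nat) :
  \sum_(u <- W L.+1 c) F u = \sum_(x <- iota 0 c) \sum_(u <- W L c) F (x :: u).
Proof. by rewrite /= big_allpairs_dep. Qed.

Lemma sumW_split L l c (F : seq nat -> nat) : l <= L ->
  \sum_(u <- W L c) F u = \sum_(a <- W l c) \sum_(t <- W (L - l) c) F (a ++ t).
Proof.
elim: l L F => [|l IH] L F hl; first by rewrite /= big_seq1 subn0.
case: L hl => [//|L] hl.
rewrite !sumW_cons subSS; apply: eq_bigr => x _; exact: IH.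
Qed.

Lemma sumW_restr L c d (g : seq nat -> nat) : d <= c ->
  (forall a, size a = L -> all (fun x => x < c) a -> 0 < g a -> all (fun x => x < d) a) ->
  \sum_(a <- W L c) g a = \sum_(a <- W L d) g a.
Proof.
move=> hdc hg.
rewrite (bigID (fun a => all (fun x => x < d) a)) /=.
rewrite [X in _ + X]big1_seq ?addn0; last first.
  move=> a /andP[hn]; rewrite memW => /andP[/eqP hs ha].
  by case: (g a =P 0) => // /eqP; rewrite -lt0n => /(hg a hs ha); rewrite (negbTE hn).
rewrite -big_filter; apply: perm_big; apply: uniq_perm.
- exact/filter_uniq/uniqW.
- exact: uniqW.
move=> a; rewrite mem_filter !memW; case hd: (all _ a); rewrite ?andbF //=.
congr (_ && _); apply/allP=> x hx; apply: leq_trans hdc; exact: (allP hd).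
Qed.

Lemma seq_ord c s : all (fun x => x < c) s -> exists t : seq 'I_c, map val t = s.
Proof.
elim: s => [|x s IH] /=; first by exists [::].
case/andP=> hx /IH [t ht]; exists (Ordinal hx :: t); by rewrite /= ht.
Qed.

Lemma cardW L c (P : pred (seq nat)) :
  #|[set t : L.-tuple 'I_c | P (map val t)]| = count P (W L c).
Proof.
rewrite -sum1_card big_mkcond /= count_sum.
rewrite (eq_bigr (fun t : L.-tuple 'I_c => (P (map val t) : nat))); last first.
  by move=> t _; rewrite in_set; case: (P _).
rewrite -(big_map (fun t : L.-tuple 'I_c => map val t) xpredT (fun s => (P s : nat))).
apply: perm_big; apply: uniq_perm; last first.
- move=> s; rewrite memW; apply/mapP/idP.
  + case=> t _ ->; rewrite size_map size_tuple eqxx /=.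
    by apply/allP=> x /mapP[y _ ->].
  + case/andP=> /eqP hs /seq_ord [t ht].
    have ht' : size t == L by rewrite -(size_map val) ht hs.
    by exists (Tuple ht'); rewrite ?mem_index_enum.
- exact: uniqW.
- rewrite map_inj_uniq ?index_enum_uniq //.
  move=> t1 t2 /= h; apply: val_inj; apply: (inj_map val_inj); exact: h.
Qed.

Lemma relabel L c (A : seq nat) (G : seq nat -> nat) : uniq A -> all (fun x => x < c) A ->
  \sum_(u <- W L c) (all (fun x => x \in A) u) * G u =
  \sum_(v <- W L (size A)) G (map (nth 0 A) v).
Proof.
move=> uA cA; elim: L G => [|L IH] G; first by rewrite /= !big_seq1 mul1n.
rewrite !sumW_cons /=.
rewrite (eq_bigr (fun x => (x \in A) * \sum_(v <- W L (size A)) G (x :: map (nth 0 A) v))); last first.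
  move=> x _; rewrite -(IH (fun u => G (x :: u))) big_distrr /=; apply: eq_bigr => u _ /=.
  by rewrite mulnA -mulnb.
rewrite (eq_bigr (fun x => if x \in A then \sum_(v <- W L (size A)) G (x :: map (nth 0 A) v) else 0)); last by move=> x _; rewrite mulnbl.
rewrite -big_mkcond -big_filter.
rewrite (perm_big A); last first.
  apply: uniq_perm; [exact/filter_uniq/iota_uniq | exact: uA |].
  move=> x; rewrite mem_filter mem_iota /=; case hx: (x \in A) => //=.
  exact: (allP cA).
by rewrite [LHS](big_nth 0) /index_iota subn0.
Qed.


Fixpoint seq2 (p q : pred nat) (s : seq nat) : bool :=
  if s is x :: s' then (p x && has q s') || seq2 p q s' else false.

Fixpoint av (s : seq nat) : bool :=
  if s is x :: s' then
    [&& ~~ seq2 (fun y => x < y) (pred1 x) s', ~~ seq2 (pred1 x) (fun y => y < x) s' & av s']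
  else true.

Lemma seq2P (p q : pred nat) s : reflect (exists j l, [/\ j < l, l < size s, p (nth 0 s j) & q (nth 0 s l)]) (seq2 p q s).
Proof.
elim: s => [|x s IH] /=.
  by apply: (iffP idP) => // [[j [l [_ hl _ _]]]].
apply: (iffP orP).
- case.
  + case/andP=> px /hasP [y ys qy]; exists 0, (index y s).+1; split=> //.
    by rewrite ltnS index_mem. by rewrite /= nth_index.
  + case/IH=> j [l [hjl hl pj ql]]; by exists j.+1, l.+1.
- case=> [[|j] [[|l] [hjl hl pj ql]]] //.
  + left; rewrite pj /=; apply/hasP; exists (nth 0 s l) => //; exact: mem_nth.
  + right; apply/IH; by exists j, l.
Qed.

Definition ex3 (R : nat -> nat -> nat -> bool) (s : seq nat) :=
  exists i j l, [/\ i < j, j < l, l < size s & R (nth 0 s i) (nth 0 s j) (nth 0 s l)].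

Lemma ex3_cons R x s : ex3 R (x :: s) <->
  (exists j l, [/\ j < l, l < size s & R x (nth 0 s j) (nth 0 s l)]) \/ ex3 R s.
Proof.
split.
- case=> [[|i] [[|j] [[|l] [hij hjl hl hR]]]] //.
  + left; by exists j, l.
  + right; by exists i, j, l.
- case.
  + case=> j [l [hjl hl hR]]; by exists 0, j.+1, l.+1.
  + case=> i [j [l [hij hjl hl hR]]]; by exists i.+1, j.+1, l.+1.
Qed.

Lemma c010P s : reflect (ex3 (fun a b c => (a == c) && (c < b)) s) (contains010 s).
Proof.
apply: (iffP existsP).
- case=> i /existsP [j /existsP [l /and4P [h1 h2 h3 h4]]].
  by exists i, j, l; split=> //; rewrite h3.
- case=> i [j [l [h1 h2 h3 /andP [h4 h5]]]].
  have hj : j < size s by apply: ltn_trans h3.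
  have hi : i < size s by apply: ltn_trans hj.
  exists (Ordinal hi); apply/existsP; exists (Ordinal hj); apply/existsP; exists (Ordinal h3).
  by rewrite /= h1 h2 h4 h5.
Qed.

Lemma c110P s : reflect (ex3 (fun a b c => (a == b) && (c < b)) s) (contains110 s).
Proof.
apply: (iffP existsP).
- case=> i /existsP [j /existsP [l /and4P [h1 h2 h3 h4]]].
  by exists i, j, l; split=> //; rewrite h3.
- case=> i [j [l [h1 h2 h3 /andP [h4 h5]]]].
  have hj : j < size s by apply: ltn_trans h3.
  have hi : i < size s by apply: ltn_trans hj.
  exists (Ordinal hi); apply/existsP; exists (Ordinal hj); apply/existsP; exists (Ordinal h3).
  by rewrite /= h1 h2 h4 h5.
Qed.

Lemma c010_cons x s : contains010 (x :: s) = seq2 (fun y => x < y) (pred1 x) s || contains010 s.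
Proof.
apply/idP/orP.
- move/c010P/ex3_cons; case.
  + case=> j [l [h1 h2 /andP[/eqP h3 h4]]]; left; apply/seq2P; exists j, l; split=> //.
    by rewrite h3. by rewrite /= h3.
  + by move/c010P; right.
- move=> H; apply/c010P/ex3_cons; move: H; case.
  + case/seq2P=> j [l [h1 h2 h3 /eqP h4]]; left; exists j, l; split=> //.
    by rewrite h4 eqxx /=.
  + by move/c010P; right.
Qed.

Lemma c110_cons x s : contains110 (x :: s) = seq2 (pred1 x) (fun y => y < x) s || contains110 s.
Proof.
apply/idP/orP.
- move/c110P/ex3_cons; case.
  + case=> j [l [h1 h2 /andP[/eqP h3 h4]]]; left; apply/seq2P; exists j, l; split=> //.
    by rewrite /= h3. by rewrite h3.
  + by move/c110P; right.
- move=> H; apply/c110P/ex3_cons; move: H; case.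
  + case/seq2P=> j [l [h1 h2 /eqP h3 h4]]; left; exists j, l; split=> //.
    by rewrite h3 eqxx /=.
  + by move/c110P; right.
Qed.

Lemma c010_nil : contains010 [::] = false.
Proof. by apply/c010P => [[i [j [l [_ _ //]]]]]. Qed.
Lemma c110_nil : contains110 [::] = false.
Proof. by apply/c110P => [[i [j [l [_ _ //]]]]]. Qed.

Lemma avoidsE s : avoids s = av s.
Proof.
rewrite /avoids; elim: s => [|x s IH]; first by rewrite c010_nil c110_nil.
rewrite c010_cons c110_cons /= -IH.
by case: (seq2 _ _ s); case: (seq2 _ _ s); case: (contains010 s); case: (contains110 s).
Qed.

Lemma seq2_cat p q s t : seq2 p q (s ++ t) = [|| seq2 p q s, has p s && has q t | seq2 p q t].
Proof.
elim: s => [|x s IH] //=; rewrite IH has_cat.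
by case: (p x); case: (has q s); case: (seq2 p q s); case: (has p s); case: (has q t); case: (seq2 p q t).
Qed.

Lemma seq2_has p q s : seq2 p q s -> has p s && has q s.
Proof.
elim: s => [|x s IH] //= /orP [/andP [-> ->] | /IH /andP [-> ->]] //; by rewrite ?orbT.
Qed.

Fixpoint cross (s t : seq nat) : bool :=
  if s is x :: s' then
    [&& cross s' t, ~~ (has (fun y => x < y) s' && (x \in t)),
        ~~ seq2 (fun y => x < y) (pred1 x) t, ~~ ((x \in s') && has (fun y => y < x) t)
      & ~~ seq2 (pred1 x) (fun y => y < x) t]
  else true.

Lemma av_cat s t : av (s ++ t) = [&& av s, av t & cross s t].
Proof.
elim: s => [|x s IH] /=; first by rewrite andbT.
rewrite !seq2_cat IH !has_pred1.
by case: (seq2 _ _ s); case: (seq2 _ _ s); case: (has _ s); case: (x \in s); case: (x \in t);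
  case: (seq2 _ _ t); case: (seq2 _ _ t); case: (has _ t); case: (av s); case: (av t); case: (cross s t).
Qed.

Definition F (s : seq nat) (v : nat) : bool :=
  (v \in s) || has (fun y => (v < y) && (1 < count_mem y s)) s.

Lemma F_cons x s v : F (x :: s) v = [|| v == x, F s v | (v < x) && (x \in s)].
Proof.
rewrite /F in_cons /= eqxx add1n ltnS -has_count has_pred1.
apply/idP/idP.
- case/orP=> [/orP [->|->] //|/orP [->|]]; rewrite ?orbT //.
  case/hasP=> y ys /andP [vy]; case: eqP => [exy|_]; rewrite ?add1n ?add0n ?ltnS.
    by rewrite -has_count has_pred1 => _; rewrite exy vy ys !orbT.
  by move=> cy; apply/orP; right; apply/orP; left; apply/orP; right; apply/hasP; exists y; rewrite ?vy.
- case/or3P=> [->|/orP [->|]|/andP[vx xs]]; rewrite ?orbT //.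
  + case/hasP=> y ys /andP [vy cy]; rewrite orbA; apply/orP; right; apply/hasP; exists y => //.
    rewrite vy /=; case: (x == y) => //; exact: ltnW.
  + by rewrite vx xs !orbT.
Qed.

Lemma cross_top (a t : seq nat) m : all (fun y => y < m) a ->
  cross a (m :: t) = all (fun v => ~~ F a v) t.
Proof.
elim: a => [|x a IH] /=; first by elim: t => // y t /= ->.
case/andP=> xm am; rewrite IH //.
rewrite (eq_all (a1 := fun v => ~~ F (x :: a) v) (a2 := fun v => ~~ [|| v == x, F a v | (v < x) && (x \in a)])); last first.
  by move=> v; rewrite F_cons.
case xt: (x \in t).
- rewrite xm has_pred1 xt /= !andbF; symmetry; apply/negbTE/negP => /allP /(_ x xt); by rewrite eqxx.
- have h2 : forall p, seq2 p (pred1 x) t = false.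
    move=> p; apply/negbTE/negP => /seq2_has /andP [_]; by rewrite has_pred1 xt.
  have h3 : forall q, seq2 (pred1 x) q t = false.
    move=> q; apply/negbTE/negP => /seq2_has /andP [+ _]; by rewrite has_pred1 xt.
  have mx : (m < x) = false by rewrite ltnNge ltnW.
  rewrite h2 h3 in_cons xt has_pred1 xt (ltn_eqF xm) (gtn_eqF xm) mx /= ?andbF ?andbT ?orbF.
  rewrite (eq_in_all (a1 := fun v => ~~ [|| v == x, F a v | (v < x) && (x \in a)]) (a2 := predI (fun v => ~~ F a v) (fun v => ~~ ((v < x) && (x \in a))))); last first.
    move=> v vt /=; have -> : (v == x) = false by apply/negbTE/negP => /eqP ev; rewrite -ev vt in xt.
    by rewrite /= negb_or.
  rewrite all_predI; congr (_ && _).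
  case: (x \in a); rewrite ?andbF ?andbT /=.
  + by rewrite -all_predC; apply: eq_all => v; rewrite andbT.
  + by clear IH; elim: t {xt h2 h3} => // y t /= <-; rewrite andbF.
Qed.


Lemma maxval_nil : maxval [::] = 0.
Proof. by rewrite /maxval big_nil. Qed.
Lemma maxval_cons x s : maxval (x :: s) = maxn x (maxval s).
Proof. by rewrite /maxval big_cons. Qed.
Lemma maxval_cat s t : maxval (s ++ t) = maxn (maxval s) (maxval t).
Proof. elim: s => [|x s IH]; by rewrite ?maxval_nil ?max0n //= !maxval_cons IH maxnA. Qed.
Lemma maxval_leP s k : (maxval s <= k) = all (fun x => x <= k) s.
Proof. elim: s => [|x s IH]; by rewrite ?maxval_nil ?maxval_cons //= geq_max IH. Qed.
Lemma leq_maxval s x : x \in s -> x <= maxval s.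
Proof.
elim: s => [|y s IH] //; rewrite in_cons maxval_cons => /orP [/eqP ->|/IH h].
  exact: leq_maxl.
apply: leq_trans h _; exact: leq_maxr.
Qed.
Lemma maxval_mem s : s != [::] -> maxval s \in s.
Proof.
elim: s => [|x s IH] // _; rewrite maxval_cons in_cons.
case: (leqP x (maxval s)) => h; last by rewrite eqxx.
case: s IH h => [|y s] IH h; last by rewrite IH ?orbT.
by move: h; rewrite maxval_nil leqn0 => /eqP ->.
Qed.

Lemma F_le s v : F s v -> v <= maxval s.
Proof.
case/orP=> [/leq_maxval //|/hasP [y ys /andP [vy _]]].
apply: ltnW; apply: leq_trans vy _; exact: leq_maxval.
Qed.

Lemma av_snoc2 s M v : all (fun y => y < M) s -> av (s ++ [:: M; v]) = av s && ~~ F s v.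
Proof. by move=> h; rewrite av_cat cross_top //= !andbF /= andbT. Qed.

Lemma forbE s : av s -> forb s = count (F s) (iota 0 (maxval s).+1).
Proof.
move=> hs; rewrite /forb; apply: eq_count => v /=.
rewrite avoidsE av_snoc2 ?hs ?negbK //.
by apply/allP => y /leq_maxval.
Qed.

Lemma count_iota_stable (p : pred nat) N K : (forall y, p y -> y < N) -> N <= K ->
  count p (iota 0 K) = count p (iota 0 N).
Proof.
move=> hp hNK; rewrite -(subnKC hNK) iotaD count_cat add0n.
rewrite -[RHS]addn0; congr (_ + _).
rewrite (@eq_in_count _ _ pred0) ?count_pred0 // => y; rewrite mem_iota => /andP [h _].
by apply/negbTE/negP => /hp; rewrite ltnNge h.
Qed.

Section Map.
Variables (D : pred nat) (g : nat -> nat).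
Hypothesis mono : {in D &, forall a b, (g a < g b) = (a < b)}.

Lemma mono_eq a b : a \in D -> b \in D -> (g a == g b) = (a == b).
Proof. by move=> ha hb; rewrite !eqn_leq (leqNgt (g a)) (leqNgt (g b)) (leqNgt a) (leqNgt b) !mono. Qed.

Lemma seq2_map p q s : seq2 p q (map g s) = seq2 (fun y => p (g y)) (fun y => q (g y)) s.
Proof. by elim: s => [|x s IH] //=; rewrite IH has_map. Qed.

Lemma eq_in_seq2 (p1 q1 p2 q2 : pred nat) s : {in s, p1 =1 p2} -> {in s, q1 =1 q2} ->
  seq2 p1 q1 s = seq2 p2 q2 s.
Proof.
elim: s => [|x s IH] //= hp hq.
rewrite hp ?mem_head // IH; last 2 first.
- by move=> y ys; apply: hp; rewrite in_cons ys orbT.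
- by move=> y ys; apply: hq; rewrite in_cons ys orbT.
rewrite (eq_in_has (a2 := q2)) // => y ys; apply: hq; by rewrite in_cons ys orbT.
Qed.

Lemma av_map s : all (fun x => x \in D) s -> av (map g s) = av s.
Proof.
elim: s => [|x s IH] //= /andP [xD sD]; rewrite IH // !seq2_map.
rewrite (@eq_in_seq2 (fun y => g x < g y) (fun y => pred1 (g x) (g y)) (fun y => x < y) (pred1 x) s); last 2 first.
- by move=> y ys /=; rewrite mono // (allP sD).
- by move=> y ys /=; rewrite mono_eq // (allP sD).
rewrite (@eq_in_seq2 (fun y => pred1 (g x) (g y)) (fun y => g y < g x) (pred1 x) (fun y => y < x) s) //.
- by move=> y ys /=; rewrite mono_eq // (allP sD).
- by move=> y ys /=; rewrite mono // (allP sD).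
Qed.

Lemma F_map s k : all (fun x => x \in D) s -> k \in D -> F (map g s) (g k) = F s k.
Proof.
move=> sD kD; rewrite /F -!has_pred1 !has_map.
congr (_ || _).
- apply: eq_in_has => y ys /=; by rewrite mono_eq // (allP sD).
- apply: eq_in_has => y ys /=; rewrite mono // ?(allP sD) //; congr (_ && (1 < _)).
  rewrite count_map; apply: eq_in_count => z zs /=; by rewrite mono_eq // (allP sD).
Qed.
End Map.

Lemma invP s : reflect (forall i, i < size s -> nth 0 s i <= i) (inversion_seq s).
Proof.
apply: (iffP forallP) => h.
- move=> i hi; exact: (h (Ordinal hi)).
- move=> i; rewrite ltnS; exact: h.
Qed.

Lemma inv_cat a m t : m <= size a -> all (fun y => y <= m) t ->
  inversion_seq (a ++ m :: t) = inversion_seq a.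
Proof.
move=> ma tm; apply/invP/invP => h i hi.
- have := h i; rewrite nth_cat hi; apply; rewrite size_cat; exact: ltn_addr.
- rewrite nth_cat; case: ltnP => hia; first exact: h.
  apply: leq_trans hia; case: (i - size a) => [|k] //=.
  apply: leq_trans ma; case: (ltnP k (size t)) => hk.
    exact: (allP tm) (mem_nth 0 hk).
  by rewrite nth_default.
Qed.

Lemma inv_bound s : inversion_seq s -> all (fun y => y < size s) s.
Proof.
move/invP=> h; apply/allP => y ys.
rewrite -(nth_index 0 ys); apply: leq_ltn_trans (h _ _) _; by rewrite index_mem.
Qed.


Lemma sum_pick x c : \sum_(y <- iota 0 c) ((x == y) : nat) = (x < c).
Proof.
elim: c => [|c IH]; first by rewrite big_nil.
rewrite -addn1 iotaD big_cat /= big_seq1 IH add0n addn1 ltnS (leq_eqVlt x c).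
by case: ltngtP.
Qed.

Lemma sum_pick_nat x a c : \sum_(a <= y < c) ((x == y) : nat) = (a <= x < c).
Proof.
have hs : forall k, \sum_(0 <= y < k) ((x == y) : nat) = (x < k).
  by move=> k; rewrite /index_iota subn0 sum_pick.
case: (leqP a c) => hac.
  have := hs c; rewrite (@big_cat_nat _ _ _ a) //= hs.
  case: (ltnP x a) => hxa /=.
    by rewrite (leq_trans hxa hac) => /eqP; rewrite eqn_add2l => /eqP.
  by rewrite add0n.
rewrite big_geq ?(ltnW hac) //; case: (leqP a x) => //= hax.
by rewrite ltnNge (ltnW (leq_trans hac hax)).
Qed.

Lemma K1 L b (G : seq nat -> nat) :
  \sum_(u <- W L b.+1) (b \notin u) * G u = \sum_(u <- W L b) G u.
Proof.
rewrite (@sumW_restr L b.+1 b) //; last first.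
  move=> a _ ha; case hb: (b \in a) => //= _; apply/allP => x xa.
  have := allP ha x xa; rewrite ltnS leq_eqVlt; case/orP => // /eqP ex.
  by rewrite -ex xa in hb.
rewrite big_seq_cond [RHS]big_seq_cond; apply: eq_bigr => u /andP [hu _].
move: hu; rewrite memW => /andP [_ hu].
case hb: (b \in u); rewrite ?mul1n //.
by have := allP hu b hb; rewrite ltnn.
Qed.

Lemma all_nseq_count k b : \sum_(t <- W k b.+1) (all (pred1 b) t : nat) = 1.
Proof.
rewrite -count_sum (@eq_in_count _ _ (pred1 (nseq k b))); last first.
  move=> t; rewrite memW => /andP [/eqP ht _] /=.
  apply/all_pred1P/eqP; by rewrite ht.
rewrite count_uniq_mem ?uniqW // memW size_nseq eqxx /=.
by rewrite all_nseq ltnS leqnn orbT.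
Qed.

Lemma av_const b t : all (pred1 b) t -> av t.
Proof.
elim: t => [|x t IH] //= /andP [/eqP -> ht]; rewrite IH // andbT.
apply/andP; split; apply/negP => /seq2_has /andP [h1 h2].
  by move: h1 => /hasP [y yt]; rewrite (eqP (allP ht y yt)) ltnn.
by move: h2 => /hasP [y yt]; rewrite (eqP (allP ht y yt)) ltnn.
Qed.

Lemma noF u b : all (fun x => x < b) u -> F u b = false.
Proof.
move=> hu; apply/negbTE/negP; case/orP.
  by move/(allP hu); rewrite ltnn.
by case/hasP => y /(allP hu) yb /andP [hby _]; move: (ltn_trans hby yb); rewrite ltnn.
Qed.

Lemma nhas_lt t b : all (fun x => x < b.+1) t -> (~~ has (fun z => z < b) t) = all (pred1 b) t.
Proof.
move=> ht; rewrite -all_predC; apply: eq_in_all => z /(allP ht) /=.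
by rewrite ltnS; case: ltngtP.
Qed.

Lemma K2pt b u1 y t : all (fun x => x < b.+1) u1 -> y < b.+1 -> all (fun x => x < b.+1) t ->
  [&& index b (u1 ++ y :: t) == size u1, b \in u1 ++ y :: t & av (b :: u1 ++ y :: t)] =
  [&& b \notin u1, av u1, b == y & all (pred1 b) t].
Proof.
move=> hu hy ht; rewrite index_cat.
case hb: (b \in u1) => /=.
  by rewrite ltn_eqF // index_mem.
case: (eqVneq y b) => [ey|hyb]; last first.
  by rewrite /index /= -[X in _ == X]addn0 eqn_add2l andbF.
rewrite ey /index /= addn0 eqxx mem_cat mem_head orbT /=.
have hu' : all (fun x => x < b) u1.
  apply/allP => x xu; have := allP hu x xu; rewrite ltnS leq_eqVlt; case/orP => // /eqP ex.
  by rewrite -ex xu in hb.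
have -> : seq2 (fun z => b < z) (pred1 b) (u1 ++ b :: t) = false.
  apply/negbTE/negP => /seq2_has /andP [/hasP [z]]; rewrite mem_cat in_cons => hz bz _.
  have : z < b.+1.
    case/or3P: hz => [/(allP hu) //|/eqP -> //|/(allP ht) //].
  by rewrite ltnS leqNgt bz.
rewrite seq2_cat has_pred1 hb /=.
have -> : seq2 (pred1 b) (fun z => z < b) u1 = false.
  by apply/negbTE/negP => /seq2_has /andP [+ _]; rewrite has_pred1 hb.
rewrite eqxx /= av_cat cross_top //.
have -> : has (fun z => z < b) t || seq2 (pred1 b) (fun z => z < b) t = has (fun z => z < b) t.
  by case h: (has _ t) => //=; apply/negbTE/negP => /seq2_has /andP [_]; rewrite h.
case hall: (all (pred1 b) t).
- have hnh : ~~ has (fun z => z < b) t by rewrite nhas_lt.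
  have hav : av (b :: t) by apply: (@av_const b); rewrite /= eqxx hall.
  have hF : all (fun v => ~~ F u1 v) t.
    by apply/allP => v vt; rewrite (eqP (allP hall v vt)) noF.
  by rewrite hnh hav hF !andbT.
- move/negbT: hall; rewrite -nhas_lt // negbK => hh; by rewrite hh /= andbF.
Qed.

Lemma K2 L b : \sum_(v <- W L b.+1) (((b \in v) && av (b :: v)) : nat) =
  \sum_(0 <= l < L) count av (W l b).
Proof.
rewrite (eq_big_seq (fun v => \sum_(0 <= l < L) ([&& index b v == l, b \in v & av (b :: v)] : nat))); last first.
  move=> v; rewrite memW => /andP [/eqP hs _].
  rewrite (eq_bigr (fun l => (index b v == l) * ((b \in v) && av (b :: v)))); last by move=> l _; rewrite mulnb.
  rewrite -big_distrl /= sum_pick_nat /=.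
  case hb: (b \in v); last by rewrite /= muln0.
  by rewrite -hs index_mem hb mul1n.
rewrite exchange_big /=; apply: eq_big_nat => l /andP [_ hl].
rewrite (@sumW_split L l) ?(ltnW hl) //.
have -> : L - l = (L - l.+1).+1 by rewrite subnSK.
rewrite count_sum -(K1 l b (fun u => (av u : nat))).
rewrite big_seq [RHS]big_seq; apply: eq_bigr => u1; rewrite memW => /andP [/eqP hs hu1].
rewrite sumW_cons.
rewrite big_seq (eq_bigr (fun y => ((b \notin u1) && av u1) * ((b == y) * \sum_(t <- W (L - l.+1) b.+1) (all (pred1 b) t : nat)))); last first.
  move=> y; rewrite mem_iota add0n => /andP [_ hy].
  rewrite !big_distrr; apply: eq_big_seq => t; rewrite memW => /andP [_ ht].
  by rewrite -hs K2pt //; case: (b \notin u1); case: (av u1); case: (b == y); case: (all _ t).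
rewrite -big_seq -big_distrr -big_distrl sum_pick all_nseq_count ltnSn. by case: (b \notin u1); case: (av u1).

Qed.


Lemma count_memE (y m : nat) (a t : seq nat) : count_mem y (a ++ m :: t) = count_mem y a + ((m == y) + count_mem y t).
Proof. by rewrite count_cat /=. Qed.

Lemma F_sub a t y : F a y -> F (a ++ t) y.
Proof.
case/orP => [ya|/hasP [z za /andP [yz cz]]]; apply/orP; first by left; rewrite mem_cat ya.
right; apply/hasP; exists z; first by rewrite mem_cat za.
by rewrite yz /= count_cat (leq_trans cz) // leq_addr.
Qed.

Lemma F_top a m t : F (a ++ m :: t) m.
Proof. by rewrite /F mem_cat mem_head orbT. Qed.

Lemma F_rep a m t y : m \in t -> y < m -> F (a ++ m :: t) y.
Proof.
move=> mt ym; apply/orP; right; apply/hasP; exists m; first by rewrite mem_cat mem_head orbT.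
have hct : 0 < count_mem m t by rewrite -has_count has_pred1.
rewrite ym /= count_memE eqxx /= addnCA add1n ltnS; exact: leq_trans hct (leq_addl _ _).
Qed.

Lemma F_split a m t y : all (fun x => x < m) a -> all (fun v => ~~ F a v) t -> m \notin t ->
  ~~ F a y -> y != m -> F (a ++ m :: t) y = F t y.
Proof.
move=> am ta mt Fy ym.
have ma : m \notin a by apply/negP => /(allP am); rewrite ltnn.
have ya : y \notin a by apply/negP => ya; move: Fy; rewrite /F ya.
rewrite /F mem_cat in_cons (negbTE ya) (negbTE ym) /=; congr (_ || _).
apply/hasP/hasP.
- case=> z; rewrite mem_cat in_cons => hz /andP [yz]; rewrite count_memE.
  case: (eqVneq m z) => [ez|nz].
    rewrite -ez; have -> : count_mem m a = 0 by apply/eqP; rewrite -leqn0 leqNgt -has_count has_pred1.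
    have -> : count_mem m t = 0 by apply/eqP; rewrite -leqn0 leqNgt -has_count has_pred1.
    by [].
  rewrite add0n => cz.
  case: (leqP 2 (count_mem z a)) => c2.
    by move: Fy; rewrite /F negb_or => /andP [_ /hasP []]; exists z; rewrite ?yz //;
      rewrite -has_pred1 has_count; apply: leq_trans c2.
  case: (posnP (count_mem z a)) => c0.
    rewrite c0 add0n in cz; exists z => //; first by rewrite -has_pred1 has_count (leq_trans _ cz).
    by rewrite yz.
  have za : z \in a by rewrite -has_pred1 has_count.
  have zt : z \in t by rewrite -has_pred1 has_count; move: c2 c0 cz; case: (count_mem z a) => [|[|k]] //= _ _; rewrite add1n ltnS.
  by move: (allP ta z zt); rewrite /F za.
- case=> z zt /andP [yz cz]; exists z; first by rewrite mem_cat in_cons zt !orbT.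
  by rewrite yz count_memE /= (leq_trans cz) // addnA leq_addl.
Qed.


Lemma count_split (p q : pred nat) s : count p s = count p (filter q s) + count p (filter (predC q) s).
Proof. elim: s => [|x s IH] //=; rewrite IH; case: (q x) => /=; [by rewrite addnA | by rewrite addnCA]. Qed.

Lemma maxsig a m t : all (fun x => x <= m) a -> all (fun x => x <= m) t -> maxval (a ++ m :: t) = m.
Proof.
rewrite -!maxval_leP => ha ht; rewrite maxval_cat maxval_cons (maxn_idPl ht) (maxn_idPr ha) //.
Qed.

Lemma forb_case a m t : all (fun x => x < m) a -> av a -> av (m :: t) -> all (fun v => ~~ F a v) t ->
  all (fun x => x < m.+1) t ->
  forb (a ++ m :: t) = if m \in t then m.+1
    else count (F a) (iota 0 m) + count (F t) (filter (fun v => ~~ F a v) (iota 0 m)) + 1.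
Proof.
move=> am ha hmt hFt tm.
have hs : av (a ++ m :: t) by rewrite av_cat cross_top // ha hmt hFt.
rewrite forbE // maxsig; last 2 first.
- by apply/allP => x /(allP am) /ltnW.
- by apply/allP => x /(allP tm).
rewrite -addn1 iotaD count_cat /= F_top addn0.
case: ifP => mt.
  rewrite (@eq_in_count _ _ predT) ?count_predT ?size_iota ?addn1 // => y; rewrite mem_iota /= => hy.
  exact: F_rep.
congr (_ + 1); rewrite (count_split _ (F a)); congr (_ + _).
- rewrite count_filter; apply: eq_count => y /=; case hy: (F a y); rewrite ?andbF ?andbT //.
  exact: F_sub.
- apply: eq_in_count => y; rewrite mem_filter mem_iota => /andP [hy hy2].
  have ym : y < m by move: hy2; rewrite add0n.
  rewrite /= F_split ?mt //; by rewrite ltn_eqF.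
Qed.

Lemma av_top b v : all (fun x => x < b.+1) v -> b \notin v -> av (b :: v) = av v.
Proof.
move=> hv hb /=.
have -> : seq2 (fun y => b < y) (pred1 b) v = false.
  by apply/negbTE/negP => /seq2_has /andP [_]; rewrite has_pred1 (negbTE hb).
have -> : seq2 (pred1 b) (fun y => y < b) v = false.
  by apply/negbTE/negP => /seq2_has /andP [+ _]; rewrite has_pred1 (negbTE hb).
by [].
Qed.

Lemma jcountE L b c : jcount L b c = count (fun s => av s && (forb s == c)) (W L b).
Proof.
rewrite -(@eq_count _ (fun s => avoids s && (forb s == c))); last by move=> s; rewrite avoidsE.
exact: (cardW L b (fun s => avoids s && (forb s == c))).
Qed.

Lemma kcountE L b : kcount L b = count av (W L b).
Proof.
rewrite -(@eq_count _ avoids); last by move=> s; rewrite avoidsE.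
exact: (cardW L b avoids).
Qed.

Lemma tau_sum a m f L : 0 < m -> maxval a < m -> av a ->
  \sum_(t <- W L m.+1) ((av (a ++ m :: t) && (forb (a ++ m :: t) == f)) : nat)
  = (forb a < f) * jcount L (m - forb a) (f - forb a - 1)
    + (f == m.+1) * \sum_(0 <= l < L) kcount l (m - forb a).
Proof.
move=> m0 hM ha.
have am : all (fun x => x < m) a by apply/allP => x /leq_maxval /leq_ltn_trans; apply.
have Fm : forall y, F a y -> y < m by move=> y h; exact: leq_ltn_trans (F_le h) hM.
set i := forb a.
have hi : count (F a) (iota 0 m) = i.
  rewrite /i forbE // (@count_iota_stable _ (maxval a).+1 m) // => y; rewrite ltnS; exact: F_le.
set B' := filter (fun v => ~~ F a v) (iota 0 m).
have hB' : size B' = m - i.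
  have hc := count_predC (F a) (iota 0 m); rewrite size_iota hi in hc.
  rewrite size_filter; change (count (predC (F a)) (iota 0 m) = m - i); lia.
set b := m - i.
set B := rcons B' m.
have hBdef : B = filter (fun v => ~~ F a v) (iota 0 m.+1).
  by rewrite -addn1 iotaD filter_cat /= noF // cats1.
have uB : uniq B by rewrite hBdef filter_uniq ?iota_uniq.
have cB : all (fun x => x < m.+1) B.
  by rewrite hBdef; apply/allP => x; rewrite mem_filter mem_iota add0n => /andP [_ /andP [_]].
have sB : size B = b.+1 by rewrite size_rcons hB'.
have sortB : sorted ltn B.
  by rewrite hBdef; apply: sorted_filter; [exact: ltn_trans | exact: iota_ltn_sorted].
set g := nth 0 B.
pose D : pred nat := fun k => k < b.+1.
have mono : {in D &, forall x y, (g x < g y) = (x < y)}.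
  move=> x y hx hy; have homo := sorted_ltn_nth ltn_trans 0 sortB.
  have hx' : x \in [pred n | n < size B] by rewrite inE sB.
  have hy' : y \in [pred n | n < size B] by rewrite inE sB.
  case: (ltngtP x y) => hxy.
  - exact: homo.
  - by apply/negbTE; rewrite -leqNgt ltnW //; apply: homo.
  - by rewrite hxy ltnn.
have gb : g b = m by rewrite /g nth_rcons hB' ltnn eqxx.
have gB' : map g (iota 0 b) = B'.
  rewrite -[RHS](mkseq_nth 0 B') hB' /mkseq; apply/eq_in_map => k; rewrite mem_iota add0n => /= hk.
  by rewrite /g nth_rcons hB' hk.
have BF : forall x, x \in B -> ~~ F a x by move=> x; rewrite hBdef mem_filter => /andP [].
rewrite (eq_big_seq (fun t => (all (fun x => x \in B) t) * ((av (m :: t) && (forb (a ++ m :: t) == f)) : nat))); last first.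
  move=> t; rewrite memW => /andP [_ ht].
  have e : all (fun v => ~~ F a v) t = all (fun x => x \in B) t.
    apply: eq_in_all => x xt; have hx : x < m.+1 := allP ht x xt; by rewrite hBdef mem_filter mem_iota add0n hx leq0n !andbT.
  rewrite av_cat cross_top // ha /= e.
  by case: (all _ t); rewrite ?mul1n ?mul0n ?andbT ?andbF.
rewrite relabel // sB.
rewrite (eq_big_seq (fun v => ((av (b :: v)) && (if b \in v then m.+1 == f else i + forb v + 1 == f)) : nat)); last first.
  move=> v; rewrite memW => /andP [_ hv].
  have vD : all (fun x => x \in D) (b :: v).
    by apply/allP => x; rewrite in_cons unfold_in /D => /orP [/eqP -> //| /(allP hv)].
  have e1 : m :: map g v = map g (b :: v) by rewrite /= gb.
  rewrite e1 (av_map mono vD).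
  case hav: (av (b :: v)); last by [].
  have hav' : av (m :: map g v) by rewrite e1 (av_map mono vD).
  rewrite -e1 /andb.
  have hgv : all (fun x => x \in B) (map g v).
    apply/allP => x /mapP [k kv ->]; apply: mem_nth; rewrite sB; exact: (allP hv).
  rewrite forb_case //; last 2 first.
  - by apply/allP => x /(allP hgv) /BF.
  - by apply/allP => x /(allP hgv) /(allP cB).
  have -> : (m \in map g v) = (b \in v).
    apply/mapP/idP => [[k kv ek]|bv]; last by exists b.
    have : g b == g k by rewrite gb ek.
    rewrite (mono_eq mono) ?unfold_in /D ?ltnSn ?(allP hv k kv) // => /eqP ->; done.
  case bv: (b \in v) => //.
  have avv : av v by rewrite -(av_top hv) ?bv.
  rewrite hi -/B' -gB' count_map.
  rewrite (@eq_in_count _ _ (F v)); last first.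
    move=> k; rewrite mem_iota add0n /= => hk.
    apply: (F_map mono); first by apply/allP => x xv; rewrite unfold_in /D (allP hv x xv).
    by rewrite unfold_in /D ltnW.
  have Fvb : forall y, F v y -> y < b.
    move=> y /orP [yv|/hasP [z zv /andP [yz _]]].
      have := allP hv y yv; rewrite ltnS leq_eqVlt; case/orP => // /eqP ey.
      by rewrite -ey yv in bv.
    apply: leq_trans yz _; rewrite -ltnS; exact: (allP hv).
  rewrite (forbE avv).
  rewrite -(@count_iota_stable (F v) b (b + (maxval v).+1)) ?leq_addr //.
  rewrite -(@count_iota_stable (F v) (maxval v).+1 (b + (maxval v).+1)) ?leq_addl //.
  by move=> y; rewrite ltnS; exact: F_le.
rewrite (eq_big_seq (fun v : seq nat => (b \notin v) * ((av v && (i + forb v + 1 == f)) : nat) + (((b \in v) && av (b :: v)) : nat) * (m.+1 == f))); last first.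
  move=> v; rewrite memW => /andP [_ hv]; case hb: (b \in v).
    by case: (av (b :: v)); case: (m.+1 == f).
  rewrite (av_top hv) ?hb //.
  by case: (av v); case: (i + forb v + 1 == f).
rewrite big_split /= -big_distrl /= K1 K2 -count_sum jcountE eq_sym mulnC.
congr (_ + _); last first.
  congr (_ * _); apply: eq_bigr => l _; by rewrite kcountE.
case: (ltnP i f) => hif.
  rewrite mul1n; apply: eq_count => v; congr (_ && _).
  apply/eqP/eqP => h; lia.
rewrite mul0n; apply/eqP; rewrite -leqn0 leqNgt -has_count; apply/hasP => [[v _ /andP [_ /eqP h]]].
lia.
Qed.


Lemma sum_pick_fun x c (Y : nat -> nat) : \sum_(0 <= k < c) (x == k) * Y k = (x < c) * Y x.
Proof.
rewrite (eq_bigr (fun k => (x == k) * Y x)); last by move=> k _; case: eqP => [->|]; rewrite ?mul0n.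
by rewrite -big_distrl sum_pick_nat.
Qed.

Lemma sum_pos (T : eqType) (s : seq T) (G : T -> nat) : 0 < \sum_(x <- s) G x -> exists2 x, x \in s & 0 < G x.
Proof.
move=> hpos; have [/hasP [x xs hx]|hn] := boolP (has (fun x => 0 < G x) s); first by exists x.
exfalso; move: hpos; rewrite big1_seq // => x /andP [_ xs]; apply/eqP; rewrite -leqn0 leqNgt.
apply/negP => hx; move/negP: hn; apply; apply/hasP; by exists x.
Qed.

Definition X L m f i := jcount L (m - i) (f - i - 1) + kdelta f m.+1 * \sum_(0 <= l < L) kcount l (m - i).

Lemma core a m f L : 0 < m -> m <= size a ->
  \sum_(t <- W L m.+1) (([&& inversion_seq (a ++ m :: t), avoids (a ++ m :: t),
       maxval (a ++ m :: t) == m & forb (a ++ m :: t) == f] && (m \notin a)) : nat)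
  = \sum_(0 <= i < f) \sum_(0 <= j < m)
      ([&& inversion_seq a, avoids a, maxval a == j & forb a == i] : nat) * X L m f i.
Proof.
move=> m0 ma.
rewrite (eq_bigr (fun i => (forb a == i) * ([&& inversion_seq a, avoids a & maxval a < m] * X L m f i))); last first.
  move=> i _.
  rewrite (eq_bigr (fun j => (maxval a == j) * ([&& inversion_seq a, avoids a & forb a == i] * X L m f i))); last first.
    by move=> j _; case: (maxval a == j); case: (inversion_seq a); case: (avoids a); case: (forb a == i); rewrite /= ?mul0n ?mul1n.
  rewrite -big_distrl /= sum_pick_nat /=.
  by case: (maxval a < m); case: (inversion_seq a); case: (avoids a); case: (forb a == i); rewrite /= ?mul0n ?mul1n.
rewrite sum_pick_fun.
case ma': (m \in a).
  rewrite big1_seq; last by move=> t _; rewrite andbF.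
  have -> : (maxval a < m) = false by rewrite ltnNge leq_maxval.
  by rewrite !andbF !muln0.
have an : a != [::] by case: a ma {ma'} => //=; rewrite leqNgt m0.
have mxa : maxval a != m by apply/eqP => e; move: (maxval_mem an); rewrite e ma'.
rewrite (eq_big_seq (fun t => ((inversion_seq a && (maxval a < m)) && (av (a ++ m :: t) && (forb (a ++ m :: t) == f))) : nat)); last first.
  move=> t; rewrite memW => /andP [_ ht].
  have htm : all (fun y => y <= m) t by apply/allP => y /(allP ht).
  rewrite inv_cat // avoidsE maxval_cat maxval_cons.
  have -> : maxn m (maxval t) = m by apply/maxn_idPl; rewrite maxval_leP.
  have -> : (maxn (maxval a) m == m) = (maxval a < m).
    case: (leqP (maxval a) m) => h; first by rewrite eqxx ltn_neqAle mxa h.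
    by rewrite (gtn_eqF h) ltnNge (ltnW h).
  by rewrite andbT; case: (inversion_seq a); case: (maxval a < m); case: (av _); case: (forb _ == f).
case c: (inversion_seq a && (maxval a < m)); last first.
  rewrite big1_seq //.
  by move: c; case: (inversion_seq a); case: (maxval a < m); rewrite ?andbF ?muln0.
case/andP: c => hinv hlt.
rewrite (eq_bigr (fun t => ((av (a ++ m :: t) && (forb (a ++ m :: t) == f)) : nat))); last by [].
rewrite avoidsE hinv hlt.
case hav: (av a); last first.
  rewrite big1_seq; last by move=> t _; rewrite av_cat hav.
  by rewrite /= muln0.
rewrite tau_sum // /X /kdelta /= mul1n.
have hfa : forb a <= m.
  rewrite forbE //; apply: leq_trans (count_size _ _) _; by rewrite size_iota.
case: (ltnP (forb a) f) => hf; first by rewrite mul1n /= mul1n.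
have -> : (f == m.+1) = false by apply/negbTE; rewrite neq_ltn ltnS (leq_trans hf hfa).
by rewrite !mul0n.
Qed.

Definition Pn m f s := [&& inversion_seq s, avoids s, maxval s == m & forb s == f].

Lemma lcE N M Fv : lcount N M Fv = count (Pn M Fv) (W N N).
Proof. exact: (cardW N N (Pn M Fv)). Qed.

Theorem mainTheorem13 (n m f : nat) :
  1 <= n -> 1 <= m ->
  lcount n m f =
  \sum_(m.+1 <= p < n.+1) \sum_(0 <= i < f) \sum_(0 <= j < m)
     lcount (p - 1) j i *
     (jcount (n - p) (m - i) (f - i - 1)
      + kdelta f m.+1 * \sum_(0 <= l < n - p) kcount l (m - i)).
Proof.
move=> n1 m1.
rewrite lcE count_sum.
rewrite (eq_big_seq (fun s => \sum_(m.+1 <= p < n.+1) (((index m s).+1 == p) : nat) * Pn m f s)); last first.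
  move=> s; rewrite memW => /andP [/eqP hs _].
  rewrite -big_distrl /= sum_pick_nat.
  case hP: (Pn m f s); last by rewrite muln0.
  case/and4P: hP => hinv _ /eqP hmax _.
  have sn : s != [::] by apply/eqP => e; move: hs n1; rewrite e => <-.
  have ms : m \in s by rewrite -hmax maxval_mem.
  have hi : index m s < size s by rewrite index_mem.
  have hmi : m <= index m s by have := (invP _ hinv) _ hi; rewrite nth_index.
  by rewrite ltnS hmi ltnS -hs hi.
rewrite exchange_big /=; apply: eq_big_nat => p /andP [hp1 hp2].
have p1 : 0 < p by apply: leq_ltn_trans hp1.
rewrite (@sumW_split n p.-1); last by lia.
have -> : n - p.-1 = (n - p).+1 by lia.
rewrite (eq_big_seq (fun a => \sum_(t <- W (n - p) m.+1) ((Pn m f (a ++ m :: t) && (m \notin a)) : nat))); last first.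
  move=> a; rewrite memW => /andP [/eqP ha _].
  rewrite sumW_cons.
  rewrite (eq_bigr (fun x => (m == x) * \sum_(t <- W (n - p) n) ((Pn m f (a ++ m :: t) && (m \notin a)) : nat))); last first.
    move=> x _; rewrite big_distrr; apply: eq_bigr => t _.
    rewrite index_cat; case hma: (m \in a).
      have : index m a < p.-1 by rewrite -ha index_mem.
      move=> hlt; rewrite ltn_eqF; last by lia.
      by rewrite [~~ true]/= andbF; case: (m == x).
    case: (eqVneq x m) => [ex|hx].
      subst x; rewrite index_head addn0 ha prednK // eqxx.
      by case: (Pn m f _).
    have -> : index m (x :: t) = (index m t).+1 by rewrite /index /= (negbTE hx).
    have -> : ((size a + (index m t).+1).+1 == p) = false by apply/negbTE/eqP; rewrite ha; lia.
    have hx2 : (m == x) = false by rewrite eq_sym; apply: negbTE.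
    by [].
  have mn : m < n by lia.
  rewrite -big_distrl sum_pick mn /= mul1n.
  apply: sumW_restr => // t _ _; case hP: (Pn m f _) => //= _.
  case/and4P: hP => _ _ /eqP hmax _; apply/allP => y yt; rewrite ltnS -hmax.
  by apply: leq_maxval; rewrite mem_cat in_cons yt !orbT.
rewrite (@sumW_restr p.-1 n p.-1); last 2 first.
- lia.
- move=> a ha _ /sum_pos [t]; rewrite memW => /andP [_ ht].
  case hP: (Pn m f _) => //= _; case/and4P: hP => hinv _ _ _.
  rewrite inv_cat in hinv; last 2 first.
  + rewrite ha; lia.
  + by apply/allP => y /(allP ht).
  by rewrite -ha; apply: inv_bound.
rewrite (eq_big_seq (fun a => \sum_(0 <= i < f) \sum_(0 <= j < m)
   (([&& inversion_seq a, avoids a, maxval a == j & forb a == i] : nat) * X (n - p) m f i))); last first.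
  move=> a; rewrite memW => /andP [/eqP ha _]; rewrite /Pn; apply: core => //; rewrite ha; lia.
rewrite exchange_big; apply: eq_bigr => i _; rewrite exchange_big; apply: eq_bigr => j _.
rewrite -big_distrl /=.
have -> : \sum_(a <- W p.-1 p.-1) ([&& inversion_seq a, avoids a, maxval a == j & forb a == i] : nat) = lcount (p - 1) j i.
  by rewrite lcE count_sum subn1.
by [].
Qed.
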